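(* Let $M$ be a sofic monoid, let $\Sigma=(D_i,\sigma_i)_{i\in I}$ be a sofic approximation of $M$, and let $A$ be a finite set. Then $h_\Sigma(A^M,M,\rho)=\log|A|$, where $\rho$ is the pseudometric on $A^M$ given by $\rho(x,y)=0$ if $x(1_M)=y(1_M)$ and $\rho(x,y)=1$ otherwise.
   Context: $A^M$ is the set of maps $M\to A$ with the prodiscrete topology and shift action $(mx)(m')=x(m'm)$. Hamming metric on $\operatorname{Map}(D)$ (maps $D\to D$, $D$ finite non-empty): $d_D^{\mathrm{Ham}}(f,g)=\frac{1}{|D|}|\{v:f(v)\ne g(v)\}|$. A sofic approximation of $M$ is a net $(D_i,\sigma_i)_{i\in I}$ over a directed set, $D_i$ non-empty finite, $\sigma_i\colon M\to\operatorname{Map}(D_i)$, with $\sigma_i(1_M)=\mathrm{Id}_{D_i}$, $\lim_i d^{\mathrm{Ham}}_{D_i}(\sigma_i(m_1m_2),\sigma_i(m_1)\sigma_i(m_2))=0$ for all $m_1,m_2$, and $\lim_i d^{\mathrm{Ham}}_{D_i}(\sigma_i(m_1),\sigma_i(m_2))=1$ for distinct $m_1,m_2$; $M$ is sofic iff it admits one. For a compact space $X$ with continuous $M$-action and continuous pseudometric $\rho$, and non-empty finite $D$: on $X^D$, $\rho_2^D(\varphi,\psi)=(\frac{1}{|D|}\sum_v\rho(\varphi(v),\psi(v))^2)^{1/2}$, $\rho_\infty^D(\varphi,\psi)=\max_v\rho(\varphi(v),\psi(v))$, $(m\varphi)(v)=m\varphi(v)$; for finite $F\subset M$, $\delta>0$,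 $\sigma\colon M\to\operatorname{Map}(D)$: $\operatorname{Map}(X,M,\rho,F,\delta,\sigma)=\{\varphi\in X^D:\rho_2^D(\varphi\circ\sigma(m),m\varphi)\le\delta\ \forall m\in F\}$. $N_\varepsilon(Z,d)$ is the maximal cardinality of a subset of $Z$ with pairwise $d$-distances $\ge\varepsilon$. $h_\Sigma(X,M,\rho)=\sup_{\varepsilon>0}\inf_F\inf_{\delta>0}\limsup_i\frac{1}{|D_i|}\log N_\varepsilon(\operatorname{Map}(X,M,\rho,F,\delta,\sigma_i),\rho_\infty^{D_i})$, infimum over finite $F\subset M$, $\log 0=-\infty$. *)

(* Defs.v *)
From HB Require Import structures.
From mathcomp Require Import all_boot all_order all_algebra.
From mathcomp Require Import all_classical all_reals all_analysis.
Set Implicit Arguments. Unset Strict Implicit. Unset Printing Implicit Defensive.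
Import Order.TTheory GRing.Theory Num.Theory.
Local Open Scope classical_set_scope.
Local Open Scope ring_scope.

Definition is_monoid (M : Type) (mul : M -> M -> M) (one : M) : Prop :=
  [/\ forall a b c, mul a (mul b c) = mul (mul a b) c,
      forall a, mul one a = a &
      forall a, mul a one = a].

Definition is_directed (I : Type) (le : I -> I -> Prop) : Prop :=
  [/\ (exists i : I, True),
      (forall i, le i i),
      (forall i j k, le i j -> le j k -> le i k) &
      (forall i j, exists k, le i k /\ le j k)].

Definition net_lim {R : realType} (I : Type) (le : I -> I -> Prop)
  (a : I -> R) (l : R) : Prop :=
  forall e : R, 0 < e -> exists i0, forall i, le i0 i -> `|a i - l| < e.

Definition net_limsup {R : realType} (I : Type) (le : I -> I -> Prop)
  (a : I -> \bar R) : \bar R :=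
  ereal_inf [set ereal_sup [set a i | i in [set i | le i0 i]] | i0 in [set: I]].

Definition hamming {R : realType} (D : finType) (f g : D -> D) : R :=
  (#|[set v | f v != g v]|%:R) / (#|D|%:R).

Definition sofic_approx {R : realType} (M : Type) (mul : M -> M -> M) (one : M)
  (I : Type) (le : I -> I -> Prop) (D : I -> finType)
  (sigma : forall i, M -> D i -> D i) : Prop :=
  [/\ is_directed le,
      (forall i, 0 < #|D i|)%N,
      (forall i, sigma i one = id),
      (forall m1 m2, net_lim le
         (fun i => @hamming R (D i) (sigma i (mul m1 m2)) (fun v => sigma i m1 (sigma i m2 v))) 0) &
      (forall m1 m2, m1 <> m2 -> net_lim le
         (fun i => @hamming R (D i) (sigma i m1) (sigma i m2)) 1)].

Definition rho2 {R : realType} (X : Type) (rho : X -> X -> R) (D : finType)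
  (phi psi : D -> X) : R :=
  Num.sqrt ((#|D|%:R)^-1 * \sum_(v : D) (rho (phi v) (psi v)) ^+ 2).

Definition rhoinf {R : realType} (X : Type) (rho : X -> X -> R) (D : finType)
  (phi psi : D -> X) : R :=
  \big[Num.max/0]_(v : D) rho (phi v) (psi v).

Definition MapSet {R : realType} (X : Type) (M : Type) (act : M -> X -> X)
  (rho : X -> X -> R) (F : set M) (delta : R) (D : finType)
  (sigma : M -> D -> D) : set (D -> X) :=
  [set phi : D -> X | forall m, F m ->
     rho2 rho (fun v => phi (sigma m v)) (fun v => act m (phi v)) <= delta].

(* N_eps(Z, d): maximal cardinality (possibly +oo) of an eps-separated subset
   of Z; a subset of cardinality n is the image of an injective 'I_n -> T. *)
Definition Nsep {R : realType} (T : Type) (Z : set T) (d : T -> T -> R) (eps : R)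
  : \bar R :=
  ereal_sup [set (n%:R)%:E | n in [set n : nat | exists f : 'I_n -> T,
     [/\ injective f, (forall k, Z (f k)) &
         (forall k l, k != l -> eps <= d (f k) (f l))]]].

(* logarithm on [0, +oo] with log 0 = -oo (and log +oo = +oo) *)
Definition elog {R : realType} (x : \bar R) : \bar R :=
  match x with
  | EFin r => if (r <= 0)%R then -oo%E else (ln r)%:E
  | +oo%E => +oo%E
  | -oo%E => -oo%E
  end.

Definition sofic_entropy {R : realType} (X : Type) (M : Type) (act : M -> X -> X)
  (rho : X -> X -> R) (I : Type) (le : I -> I -> Prop) (D : I -> finType)
  (sigma : forall i, M -> D i -> D i) : \bar R :=
  ereal_sup [set
    ereal_inf [set
      ereal_inf [set
        net_limsup le (fun i =>
          ((#|D i|%:R)^-1)%:E *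
          elog (Nsep (MapSet act rho F delta (sigma i)) (rhoinf rho (D:=D i)) eps))%E
      | delta in [set delta : R | 0 < delta]]
    | F in [set F : set M | finite_set F]]
  | eps in [set eps : R | 0 < eps]].

Definition full_shift (M A : Type) (mul : M -> M -> M) (m : M) (x : M -> A) : M -> A :=
  fun m' => x (mul m' m).

Definition rho_one {R : realType} (M : Type) (A : eqType) (one : M)
  (x y : M -> A) : R :=
  if x one == y one then 0 else 1.

(* Main.v *)
Require Import Defs.
From HB Require Import structures.
From mathcomp Require Import all_boot all_order all_algebra.
From mathcomp Require Import all_classical all_reals all_analysis.
From mathcomp Require Import ring lra.
Import Order.TTheory GRing.Theory Num.Theory.
Local Open Scope classical_set_scope.
Local Open Scope ring_scope.

Section Aux.
Variables (R : realType) (M : Type) (mul : M -> M -> M) (one : M) (A : finType).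
Variable (D : finType) (sigma : M -> D -> D).

Lemma rhoinf_ge (phi psi : D -> (M -> A)) v :
  @rho_one R M A one (phi v) (psi v) <= rhoinf (@rho_one R M A one) phi psi.
Proof. rewrite /rhoinf; exact: (le_bigmax (0:R) (fun v => rho_one one (phi v) (psi v)) v). Qed.

Lemma rhoinf_eq0 (phi psi : D -> (M -> A)) :
  (forall v, phi v one = psi v one) -> rhoinf (@rho_one R M A one) phi psi = 0.
Proof.
move=> H; rewrite /rhoinf; apply: (big_ind (fun x : R => x = 0)) => //.
  by move=> x y -> ->; rewrite maxxx.
by move=> v _; rewrite /rho_one H eqxx.
Qed.

Lemma Nsep_ub (Z : set (D -> (M -> A))) (eps : R) : 0 < eps ->
  (Nsep Z (@rhoinf R _ (@rho_one R M A one) D) eps <= ((#|A| ^ #|D|)%N%:R)%:E)%E.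
Proof.
move=> eps0; apply: ge_ereal_sup => _ [n [f [finj fZ fsep]] <-].
rewrite lee_fin ler_nat.
pose g (k : 'I_n) : {ffun D -> A} := [ffun v => f k v one].
have ginj : injective g.
  move=> k l /ffunP gkl; apply/eqP; apply/negPn/negP => kl.
  have := fsep _ _ kl; rewrite rhoinf_eq0 ?leNgt ?eps0 //.
  by move=> v; have := gkl v; rewrite !ffunE.
by have := leq_card g ginj; rewrite card_ord card_ffun.
Qed.

Lemma Nsep_lb (F : set M) (delta eps : R) : 0 <= delta -> eps <= 1 ->
  (forall a, mul one a = a) -> sigma one = id ->
  (((#|A| ^ #|D|)%N%:R)%:E <=
   Nsep (MapSet (@full_shift M A mul) (@rho_one R M A one) F delta sigma)
     (@rhoinf R _ (@rho_one R M A one) D) eps)%E.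
Proof.
move=> d0 e1 mul1 s1; apply: ereal_sup_ubound; exists #|{ffun D -> A}|; last by rewrite card_ffun.
pose f (k : 'I_#|{ffun D -> A}|) : D -> (M -> A) := fun v m => (enum_val k) (sigma m v).
have fone k v : f k v one = enum_val k v by rewrite /f s1.
exists f; split.
- move=> k l fkl; apply: enum_val_inj; apply/ffunP => v.
  by rewrite -!fone fkl.
- move=> k m _; rewrite /rho2.
  have -> : \sum_(v : D) (@rho_one R M A one (f k (sigma m v)) (full_shift mul m (f k v))) ^+ 2 = 0.
    apply: big1 => v _; rewrite /rho_one /full_shift /f mul1 s1 eqxx.
    by rewrite expr0n.
  by rewrite mulr0 sqrtr0.
- move=> k l kl; have : enum_val k != enum_val l.
    by apply: contra kl => /eqP /enum_val_inj ->.
  move=> ne.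
  have [v hv] : exists v, enum_val k v != enum_val l v.
    apply/existsP; apply: contraR ne; rewrite negb_exists => /forallP H.
    by apply/eqP/ffunP => v; apply/eqP; have := H v; rewrite negbK.
  apply: le_trans e1 _; apply: le_trans (rhoinf_ge _ _ v).
  by rewrite /rho_one !fone (negbTE hv).
Qed.
End Aux.

Lemma elog_mono (R : realType) (x y : \bar R) : (x <= y)%E -> (elog x <= elog y)%E.
Proof.
case: x => [r| |]; last by move=> _; rewrite leNye.
- rewrite /=; case: ifP => r0; first by rewrite leNye.
  case: y => [s| |]; last by rewrite leNgt ltNye.
    2: by move=> _; rewrite /= leey.
  rewrite lee_fin => rs /=; have s0 : ~~ (s <= 0) by rewrite -ltNge (lt_le_trans _ rs) // ltNge r0.
  rewrite (negbTE s0) lee_fin ler_ln // posrE ltNge ?r0 ?s0 //.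
- by case: y => [s| |] //=; rewrite leNgt ltey.
Qed.

Lemma elog_scale (R : realType) (a d : nat) : (0 < d)%N ->
  ((d%:R : R)^-1%:E * elog (((a ^ d)%N%:R : R)%:E) = elog ((a%:R : R)%:E))%E.
Proof.
move=> d0 /=; case: a => [|a].
  rewrite exp0n // !lexx gt0_muleNy // lte_fin invr_gt0 ltr0n //.
rewrite !ifN -?ltNge ?ltr0n ?expn_gt0 //= natrX lnXn ?ltr0n //.
rewrite -EFinM; congr EFin.
have dn0 : (d%:R : R) != 0 by rewrite pnatr_eq0 -lt0n.
by rewrite -mulr_natr; field.
Qed.

Lemma limsup_le (R : realType) (I : Type) (le : I -> I -> Prop) (a : I -> \bar R) c :
  (exists i : I, True) -> (forall i, (a i <= c)%E) -> (net_limsup le a <= c)%E.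
Proof.
case=> i0 _ H; rewrite /net_limsup.
apply: (@le_trans _ _ (ereal_sup [set a i | i in [set i | le i0 i]])).
  by apply: ereal_inf_lbound; exists i0.
by apply: ge_ereal_sup => _ [i _ <-].
Qed.

Lemma limsup_ge (R : realType) (I : Type) (le : I -> I -> Prop) (a : I -> \bar R) c :
  (forall i, le i i) -> (forall i, (c <= a i)%E) -> (c <= net_limsup le a)%E.
Proof.
move=> refl H; rewrite /net_limsup; apply: le_ereal_inf_tmp => _ [i0 _ <-].
apply: le_trans (H i0) _; apply: ereal_sup_ubound; by exists i0.
Qed.

Theorem lemma5p2 (R : realType) (M : Type) (mul : M -> M -> M) (one : M)
  (I : Type) (le : I -> I -> Prop) (D : I -> finType)
  (sigma : forall i, M -> D i -> D i) (A : finType) :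
  is_monoid mul one ->
  @sofic_approx R M mul one I le D sigma ->
  sofic_entropy (@full_shift M A mul) (@rho_one R M A one) le sigma
  = elog ((#|A|%:R : R)%:E).
Proof.
move=> [_ mul1 _] [[Ine lerefl _ _] Dpos s1 _ _].
have cpos i : (0 < ((#|D i|%:R : R)^-1)%:E)%E by rewrite lte_fin invr_gt0 ltr0n.
have cfin i : ((#|D i|%:R : R)^-1)%:E \is a fin_num by [].
have ub eps F delta i : 0 < eps ->
  (((#|D i|%:R : R)^-1)%:E * elog (Nsep (MapSet (@full_shift M A mul) (@rho_one R M A one) F delta (sigma i))
     (@rhoinf R _ (@rho_one R M A one) (D i)) eps) <= elog ((#|A|%:R : R)%:E))%E.
  move=> e0; rewrite -(@elog_scale R #|A| _ (Dpos i)) lee_pmul2l //.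
  by apply: elog_mono; apply: Nsep_ub.
have lb F delta i : 0 <= delta ->
  (elog ((#|A|%:R : R)%:E) <= ((#|D i|%:R : R)^-1)%:E * elog (Nsep (MapSet (@full_shift M A mul) (@rho_one R M A one) F delta (sigma i))
     (@rhoinf R _ (@rho_one R M A one) (D i)) 1))%E.
  move=> d0; rewrite -(@elog_scale R #|A| _ (Dpos i)) lee_pmul2l //.
  by apply: elog_mono; apply: Nsep_lb.
apply/le_anti/andP; split.
- apply: ge_ereal_sup => _ [eps eps0 <-].
  apply: le_trans; first (apply: ereal_inf_lbound; exists set0; [exact: finite_set0| reflexivity]).
  apply: le_trans; first (apply: ereal_inf_lbound; exists 1; [exact: ltr01| reflexivity]).
  by apply: limsup_le => // i; apply: ub.
- apply: le_trans; last (apply: ereal_sup_ubound; exists 1; [exact: ltr01| reflexivity]).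
  apply: le_ereal_inf_tmp => _ [F _ <-].
  apply: le_ereal_inf_tmp => _ [delta d0 <-].
  by apply: limsup_ge => // i; apply: lb; apply: ltW.
Qed.
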